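(* Let $(E,\mathscr{T},\le)$ be a completely regularly ordered space, let $\beta:E\to(\beta E,\mathscr{T}_\beta,\le_\beta)$ be the Stone–Čech compactification endowed with the preorder $G(\le_\beta)=\bigcap_{f\in\mathcal{F}}G_{\tilde f}$ ($\mathcal{F}$ the family of continuous isotone functions $f:E\to[0,1]$, $\tilde f$ the unique continuous extension of $f\circ\beta^{-1}$ to $\beta E$), and let $\Pi:\beta E\to\beta E/\!\sim_\beta$ be the quotient projection onto the $T_2$-ordered space $(\beta E/\!\sim_\beta,\mathscr{T}_\beta/\!\sim_\beta,\lesssim_\beta)$. Then $\Pi\circ\beta:E\to\beta E/\!\sim_\beta$ is a $T_2$-order compactification equivalent to the Nachbin $T_2$-order compactification $n:E\to nE$.
   Context: A topological ordered space $(E,\mathscr{T},\le)$ is completely regularly ordered if $\le$ is an order, $\mathscr{T}$ is the initial topology of the continuous isotone functions $E\to[0,1]$, and $x\le y$ iff $f(x)\le f(y)$ for all such functions. Isotone: $x\le y\Rightarrow f(x)\le f(y)$; $G_f=\{(x,y):f(x)\le f(y)\}$. $x\sim_\beta y$ means $x\le_\beta y$ and $y\le_\beta x$; the quotient carries the quotient topology and the order $[x]\lesssim_\beta[y]$ iff $x\le_\beta y$. $T_2$-ordered: order with closed graph. A $T_2$-order compactification of $E$ is a map $c:E\to cE$ into a compact Hausdorff $T_2$-ordered space, which is a homeomorphism onto its dense image and is isotone with isotone inverse on the image. $c_1\le c_2$ means there is a continuous isotone $C:c_2E\to c_1E$ with $C\circ c_2=c_1$; equivalent: both directions. The Nachbin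 $T_2$-order compactification is the (unique up to equivalence) $T_2$-order compactification $n:E\to nE$ to which every continuous isotone function $E\to[0,1]$ extends as a continuous isotone function. *)

(* Defs.v *)
From HB Require Import structures.
From mathcomp Require Import all_boot all_order all_algebra.
From mathcomp Require Import generic_quotient.
From mathcomp Require Import all_classical all_reals all_analysis.
Import numFieldTopology.Exports numFieldNormedType.Exports.
Set Implicit Arguments. Unset Strict Implicit. Unset Printing Implicit Defensive.
Import Order.TTheory GRing.Theory Num.Theory.
Local Open Scope classical_set_scope.
Local Open Scope ring_scope.
Local Open Scope quotient_scope.

Section Defs.
Variable R : realType.

Definition is_order (T : Type) (le : T -> T -> Prop) :=
  [/\ forall x, le x x,
      forall x y, le x y -> le y x -> x = y &
      forall x y z, le x y -> le y z -> le x z].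

Definition cont_iso01 (E : topologicalType) (le : E -> E -> Prop) (f : E -> R) :=
  [/\ continuous f, forall x, 0 <= f x <= 1 & forall x y, le x y -> f x <= f y].

(* the topology of E is the initial topology of the family F:
   open sets are exactly unions of finite intersections of sets f^-1(U),
   f in F, U open in R *)
Definition subbasic_F (E : topologicalType) (le : E -> E -> Prop) (A : set E) :=
  exists f : E -> R, cont_iso01 le f /\ exists U : set R, open U /\ A = f @^-1` U.

Definition initial_topology_F (E : topologicalType) (le : E -> E -> Prop) :=
  forall A : set E, open A <->
    (forall x, A x -> exists2 B, finI_from (subbasic_F le) id B & B x /\ B `<=` A).

Definition completely_regularly_ordered (E : topologicalType) (le : E -> E -> Prop) :=
  [/\ is_order le, initial_topology_F le &
      forall x y, le x y <-> (forall f, cont_iso01 le f -> f x <= f y)].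

Definition embedding (E K : topologicalType) (c : E -> K) :=
  [/\ injective c, continuous c &
      forall U : set E, open U -> exists V : set K, open V /\ c @` U = V `&` range c].

Definition stone_cech (E bE : topologicalType) (b : E -> bE) :=
  [/\ compact [set: bE], hausdorff_space bE, embedding b, dense (range b) &
      forall f : E -> R, continuous f -> (exists M : R, forall x, `|f x| <= M) ->
        exists g : bE -> R, continuous g /\ forall x, g (b x) = f x].

Definition T2_order_compactification (E : topologicalType) (le : E -> E -> Prop)
    (K : topologicalType) (leK : K -> K -> Prop) (c : E -> K) :=
  [/\ compact [set: K], hausdorff_space K,
      is_order leK /\ closed [set p : K * K | leK p.1 p.2],
      embedding c /\ dense (range c) &
      forall x y, le x y <-> leK (c x) (c y)].

Definition compactification_le (E : topologicalType)
    (K1 : topologicalType) (le1 : K1 -> K1 -> Prop) (c1 : E -> K1)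
    (K2 : topologicalType) (le2 : K2 -> K2 -> Prop) (c2 : E -> K2) :=
  exists C : K2 -> K1, [/\ continuous C, forall x y, le2 x y -> le1 (C x) (C y) &
                          forall x, C (c2 x) = c1 x].

Definition compactification_equiv (E : topologicalType)
    (K1 : topologicalType) (le1 : K1 -> K1 -> Prop) (c1 : E -> K1)
    (K2 : topologicalType) (le2 : K2 -> K2 -> Prop) (c2 : E -> K2) :=
  compactification_le le1 c1 le2 c2 /\ compactification_le le2 c2 le1 c1.

Definition nachbin_compactification (E : topologicalType) (le : E -> E -> Prop)
    (nE : topologicalType) (len : nE -> nE -> Prop) (n : E -> nE) :=
  T2_order_compactification le len n /\
  forall f : E -> R, cont_iso01 le f ->
    exists g : nE -> R, [/\ continuous g, forall x, 0 <= g x <= 1,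
      forall x y, len x y -> g x <= g y & forall x, g (n x) = f x].

Definition le_beta (E : topologicalType) (le : E -> E -> Prop)
    (bE : topologicalType) (b : E -> bE) (x y : bE) :=
  forall f : E -> R, cont_iso01 le f ->
    forall g : bE -> R, continuous g -> (forall z, g (b z) = f z) -> g x <= g y.

Definition sim_beta (E : topologicalType) (le : E -> E -> Prop)
    (bE : topologicalType) (b : E -> bE) : rel bE :=
  fun x y => `[< le_beta le b x y /\ le_beta le b y x >].

Lemma sim_beta_refl (E : topologicalType) (le : E -> E -> Prop)
    (bE : topologicalType) (b : E -> bE) : reflexive (@sim_beta E le bE b).
Proof. by move=> x; apply/asboolP; split => f _ g _ _. Qed.

Lemma sim_beta_sym (E : topologicalType) (le : E -> E -> Prop)
    (bE : topologicalType) (b : E -> bE) : symmetric (@sim_beta E le bE b).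
Proof.
move=> x y; apply/asboolP/asboolP; by case.
Qed.

Lemma sim_beta_trans (E : topologicalType) (le : E -> E -> Prop)
    (bE : topologicalType) (b : E -> bE) : transitive (@sim_beta E le bE b).
Proof.
move=> y x z /asboolP[h1 h2] /asboolP[h3 h4]; apply/asboolP; split.
- move=> f hf g cg hg; apply: le_trans (h1 f hf g cg hg) (h3 f hf g cg hg).
- move=> f hf g cg hg; apply: le_trans (h4 f hf g cg hg) (h2 f hf g cg hg).
Qed.

Canonical sim_beta_equiv (E : topologicalType) (le : E -> E -> Prop)
    (bE : topologicalType) (b : E -> bE) : equiv_rel bE :=
  EquivRel (@sim_beta E le bE b) (@sim_beta_refl E le bE b)
           (@sim_beta_sym E le bE b) (@sim_beta_trans E le bE b).

Definition beta_quot (E : topologicalType) (le : E -> E -> Prop)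
    (bE : topologicalType) (b : E -> bE) : topologicalType :=
  quotient_topology {eq_quot (sim_beta_equiv le b)}.

Definition beta_proj (E : topologicalType) (le : E -> E -> Prop)
    (bE : topologicalType) (b : E -> bE) : bE -> beta_quot le b :=
  fun x => \pi_(beta_quot le b) x.

Definition le_quot (E : topologicalType) (le : E -> E -> Prop)
    (bE : topologicalType) (b : E -> bE) (p q : beta_quot le b) : Prop :=
  le_beta le b (repr p) (repr q).

End Defs.

(* Main.v *)
Require Import Defs.
From HB Require Import structures.
From mathcomp Require Import all_boot all_order all_algebra.
From mathcomp Require Import generic_quotient.
From mathcomp Require Import all_classical all_reals all_analysis.
From mathcomp Require Import zify finmap.
Import numFieldTopology.Exports numFieldNormedType.Exports.
Set Implicit Arguments. Unset Strict Implicit. Unset Printing Implicit Defensive.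
Import Order.TTheory GRing.Theory Num.Theory.
Local Open Scope classical_set_scope.
Local Open Scope ring_scope.

Lemma closed_upset (K : topologicalType) (r : K -> K -> Prop) :
  compact [set: K] -> closed [set p : K * K | r p.1 p.2] ->
  forall A, closed A -> closed [set x | exists2 a, A a & r a x].
Proof.
move=> cK cG A cA x clx.
have cpA : compact A := subclosed_compact cA cK (@subsetT _ A).
pose F := filter_from (nbhs x) (fun N => [set a | A a /\ exists2 y, N y & r a y]).
have FF : ProperFilter F.
  apply: filter_from_proper.
    apply: filter_from_filter; first by exists setT; exact: filterT.
    move=> N1 N2 h1 h2; exists (N1 `&` N2); first exact: filterI.
    by move=> a [Aa [y [N1y N2y] ray]]; split; split=> //; exists y.
  move=> N nN; have [y [[a Aa ray] Ny]] := clx N nN.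
  by exists a; split=> //; exists y.
have FA : F A by exists setT; [exact: filterT| move=> a []].
have [a [Aa cla]] := cpA F FF FA.
exists a => //; apply: (cG (a, x)) => P nP.
case: nP => [[Q1 Q2] /= [nQ1 nQ2] sQ].
have Fs : F [set a' | A a' /\ exists2 y, Q2 y & r a' y] by exists Q2.
have [a' [[Aa' [y Q2y ray]] Q1a']] := cla _ _ Fs nQ1.
by exists (a', y); split => //; apply: sQ.
Qed.
Lemma closed_downset (K : topologicalType) (r : K -> K -> Prop) :
  compact [set: K] -> closed [set p : K * K | r p.1 p.2] ->
  forall A, closed A -> closed [set x | exists2 a, A a & r x a].
Proof.
move=> cK cG A cA x clx.
have cpA : compact A := subclosed_compact cA cK (@subsetT _ A).
pose F := filter_from (nbhs x) (fun N => [set a | A a /\ exists2 y, N y & r y a]).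
have FF : ProperFilter F.
  apply: filter_from_proper.
    apply: filter_from_filter; first by exists setT; exact: filterT.
    move=> N1 N2 h1 h2; exists (N1 `&` N2); first exact: filterI.
    by move=> a [Aa [y [N1y N2y] ray]]; split; split=> //; exists y.
  move=> N nN; have [y [[a Aa ray] Ny]] := clx N nN.
  by exists a; split=> //; exists y.
have FA : F A by exists setT; [exact: filterT| move=> a []].
have [a [Aa cla]] := cpA F FF FA.
exists a => //; apply: (cG (x, a)) => P nP.
case: nP => [[Q1 Q2] /= [nQ1 nQ2] sQ].
have Fs : F [set a' | A a' /\ exists2 y, Q1 y & r y a'] by exists Q1.
have [a' [[Aa' [y Q1y ray]] Q2a']] := cla _ _ Fs nQ2.
by exists (y, a'); split => //; apply: sQ.
Qed.

Section OrdUrysohn.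
Variables (R : realType) (K : topologicalType) (r : K -> K -> Prop).
Hypotheses (cK : compact [set: K]) (hK : hausdorff_space K)
  (rr : forall x, r x x) (rt : forall x y z, r x y -> r y z -> r x z)
  (cG : closed [set p : K * K | r p.1 p.2]).

Definition decr (A : set K) := forall x y, r x y -> A y -> A x.
Definition goodO (A : set K) := open A /\ decr A.
Definition goodC (A : set K) := closed A /\ decr A.

Definition interpP (C U : set K) (p : set K * set K) :=
  [/\ goodO p.1, goodC p.2, C `<=` p.1, p.1 `<=` p.2 & p.2 `<=` U].

Lemma interp_ex C U : goodC C -> goodO U -> C `<=` U -> exists p, interpP C U p.
Proof.
move=> [cC dC] [oU dU] CU.
have nK := compact_normal hK cK.
have sU : set_nbhs C U by rewrite set_nbhsP; exists U; split.
have [N sN clNU] := nK C cC U sU.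
have [N' [oN' CN' N'N]] := (set_nbhsP C N).1 sN.
pose V := [set x | forall y, r y x -> N' y].
pose C' := [set x | exists2 a, closure V a & r x a].
exists (V, C'); split => /=.
- split.
    have -> : V = ~` [set x | exists2 a, (~` N') a & r a x].
      apply/seteqP; split => x /=.
        by move=> Vx [a Na rax]; apply: Na; apply: Vx.
      move=> h y ryx; apply: contrapT => Ny; apply: h; by exists y.
    apply: closed_openC; apply: closed_upset => //.
    exact: open_closedC.
  by move=> x y rxy Vy z rzx; apply: Vy; exact: rt rzx rxy.
- split; first exact/closed_downset/closed_closure.
  by move=> x y rxy [a Va rya]; exists a => //; exact: rt rxy rya.
- by move=> x Cx y ryx; apply: CN'; exact: dC ryx Cx.
- by move=> x Vx; exists x => //; exact: subset_closure.
- move=> x [a Va rxa]; apply: (dU x a rxa); apply: clNU.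
  apply: (closureS N'N); apply: (closureS _ Va) => y Vy; exact: Vy.
Qed.

Definition interp C U : set K * set K :=
  match pselect (exists p, interpP C U p) with
  | left h => projT1 (cid h)
  | right _ => (setT, setT)
  end.

Lemma interpE C U : goodC C -> goodO U -> C `<=` U -> interpP C U (interp C U).
Proof.
move=> gC gU CU; rewrite /interp; case: pselect => [h|h]; first exact: projT2 (cid h).
by exfalso; apply: h; exact: interp_ex.
Qed.

Section UryC.
Variables (C0 U1 : set K).
Hypotheses (gC0 : goodC C0) (gU1 : goodO U1) (C0U1 : C0 `<=` U1).

Fixpoint dat (n : nat) : nat -> set K * set K :=
  match n with
  | 0 => fun k => if k == 0%N then interp C0 U1 else (U1, setT)
  | m.+1 => fun j => if odd j then interp (dat m j./2).2 (dat m (j./2).+1).1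
                     else dat m j./2
  end.

Definition Inv n := (forall i, (i <= 2 ^ n)%N ->
   [/\ goodO (dat n i).1, goodC (dat n i).2 & (dat n i).1 `<=` (dat n i).2]) /\
  (forall i, (i < 2 ^ n)%N -> (dat n i).2 `<=` (dat n i.+1).1).

Lemma goodT_O : goodO setT. Proof. by split; [exact: openT|]. Qed.
Lemma goodT_C : goodC setT. Proof. by split; [exact: closedT|]. Qed.

Lemma InvP n : Inv n.
Proof.
elim: n => [|n [IH1 IH2]].
  have [g1 g2 g3 g4 g5] := interpE gC0 gU1 C0U1.
  split.
    case=> [|[|//]] _ /=; first by split.
    by split => //; exact: goodT_C.
  by case=> [|//] _ /=.
split.
  move=> i; rewrite expnS => hi /=.
  case: ifP => oi.
    have hk : (i./2 < 2 ^ n)%N.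
      rewrite -(ltn_pmul2l (isT : (0 < 2)%N)) -[i./2]/(i./2) .
      by move: hi; rewrite -[in X in (X <= _)%N](odd_double_half i) oi mul2n; lia.
    have [a1 a2 a3] := IH1 _ (ltnW hk); have [b1 b2 b3] := IH1 _ hk.
    have [g1 g2 g3 g4 g5] := interpE a2 b1 (IH2 _ hk).
    by split.
  apply: IH1.
  by move: hi; rewrite -[in X in (X <= _)%N](odd_double_half i) oi mul2n; lia.
move=> i; rewrite expnS => hi /=.
case: ifP => oi /=; rewrite uphalf_half oi /= ?add1n ?add0n.
  have hk : (i./2 < 2 ^ n)%N.
    by move: hi; rewrite -[in X in (X < _)%N](odd_double_half i) oi mul2n; lia.
  have [a1 a2 a3] := IH1 _ (ltnW hk); have [b1 b2 b3] := IH1 _ hk.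
  have [g1 g2 g3 g4 g5] := interpE a2 b1 (IH2 _ hk).
  by [].
have hk : (i./2 < 2 ^ n)%N.
  by move: hi; rewrite -[in X in (X < _)%N](odd_double_half i) oi mul2n; lia.
have [a1 a2 a3] := IH1 _ (ltnW hk); have [b1 b2 b3] := IH1 _ hk.
have [g1 g2 g3 g4 g5] := interpE a2 b1 (IH2 _ hk).
by [].
Qed.


Lemma dat_lift d n k : dat (d + n) (k * 2 ^ d) = dat n k.
Proof.
elim: d k => [|d IH] k; first by rewrite muln1.
have e : (k * 2 ^ d.+1 = (k * 2 ^ d).*2)%N by rewrite expnS -mul2n; lia.
rewrite addSn e /= odd_double doubleK; exact: IH.
Qed.

Lemma chain_same n i j : (i < j <= 2 ^ n)%N -> (dat n i).2 `<=` (dat n j).1.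
Proof.
have [I1 I2] := InvP n.
elim: j => [|j IH] /andP[ij jn]; first by [].
rewrite ltnS leq_eqVlt in ij; case/orP: ij => [/eqP ->|ij].
  exact: (I2 _ jn).
have h1 : (i < j <= 2 ^ n)%N by rewrite ij /=; exact: ltnW.
have [_ _ h] := I1 _ (ltnW jn).
by move=> x /(IH h1) /h /(I2 _ jn).
Qed.

Lemma chain m j n k : (j <= 2 ^ m)%N -> (k <= 2 ^ n)%N -> (j * 2 ^ n < k * 2 ^ m)%N ->
  (dat m j).2 `<=` (dat n k).1.
Proof.
move=> jm kn h.
rewrite -(dat_lift n m j) -(dat_lift m n k) (addnC m n).
apply: chain_same; rewrite h /= expnD leq_pmul2r ?expn_gt0 //.
Qed.

Lemma datO_sub n k : (k <= 2 ^ n)%N -> (dat n k).1 `<=` (dat n k).2.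
Proof. by move=> h; have [_ _] := (InvP n).1 _ h. Qed.

Lemma datO_decr n k : (k <= 2 ^ n)%N -> decr (dat n k).1.
Proof. by move=> h; have [[_ ?] _] := (InvP n).1 _ h. Qed.

Lemma datO_open n k : (k <= 2 ^ n)%N -> open (dat n k).1.
Proof. by move=> h; have [[? _] _] := (InvP n).1 _ h. Qed.

Lemma datC_closed n k : (k <= 2 ^ n)%N -> closed (dat n k).2.
Proof. by move=> h; have [_ [? _] _] := (InvP n).1 _ h. Qed.

Lemma dat_top n : dat n (2 ^ n)%N = (U1, setT).
Proof. by have := dat_lift n 0 1; rewrite addn0 mul1n. Qed.

Lemma dat_bot : C0 `<=` (dat 0 0).1.
Proof. by have [_ _ h _ _] := interpE gC0 gU1 C0U1. Qed.
Definition dy n k : R := k%:R / (2 ^ n)%N%:R.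

Lemma pow2_gt0 n : 0 < (2 ^ n)%N%:R :> R.
Proof. by rewrite ltr0n expn_gt0. Qed.

Lemma dy_ge0 n k : 0 <= dy n k.
Proof. by rewrite /dy divr_ge0 // ltW // pow2_gt0. Qed.

Lemma dy_le1 n k : (k <= 2 ^ n)%N -> dy n k <= 1.
Proof. by move=> h; rewrite /dy ler_pdivrMr ?pow2_gt0 // mul1r ler_nat. Qed.

Lemma dy_lt m j n k : (dy m j < dy n k) = (j * 2 ^ n < k * 2 ^ m)%N.
Proof.
by rewrite /dy ltr_pdivrMr ?pow2_gt0 // mulrAC ltr_pdivlMr ?pow2_gt0 // -!natrM ltr_nat.
Qed.

Lemma small_pow (e : R) : 0 < e -> exists m, ((2 ^ m)%N%:R)^-1 < e.
Proof.
move=> e0; exists (Num.bound e^-1).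
have := @upper_nthrootP R e^-1 (Num.bound e^-1) (leqnn _).
rewrite -natrX => h.
by rewrite -[X in _ < X]invrK ltf_pV2 ?posrE ?invr_gt0 ?pow2_gt0.
Qed.

Lemma dy_dense (t u : R) : 0 <= t -> t < u -> u <= 1 ->
  exists n k, [/\ (k < 2 ^ n)%N, t < dy n k & dy n k < u].
Proof.
move=> t0 tu u1.
have ut0 : 0 < u - t by rewrite subr_gt0.
have [m hm] := small_pow ut0.
set k := (Num.truncn (t * (2 ^ m)%N%:R)).+1.
have [h1 h2] := andP (truncn_itv (mulr_ge0 t0 (ltW (pow2_gt0 m)))).
have tk : t < dy m k by rewrite /dy ltr_pdivlMr ?pow2_gt0.
have ku : dy m k < u.
  rewrite /dy /k -addn1 natrD mulrDl.
  have : (Num.truncn (t * (2 ^ m)%N%:R))%:R / (2 ^ m)%N%:R <= t.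
    by rewrite ler_pdivrMr ?pow2_gt0.
  move: hm; rewrite mul1r ltrBrDl => hm hh.
  by apply: le_lt_trans hm; rewrite lerD2r.
exists m, k; split => //.
have : dy m k < 1 by exact: lt_le_trans ku u1.
by rewrite /dy ltr_pdivrMr ?pow2_gt0 // mul1r ltr_nat.
Qed.

Definition Sx x := [set t : R | t = 1 \/
  exists n k, [/\ (k <= 2 ^ n)%N, (dat n k).1 x & t = dy n k]].
Definition ury x := inf (Sx x).

Lemma Sx_ne x : Sx x !=set0. Proof. by exists 1; left. Qed.
Lemma Sx_lb x : lbound (Sx x) 0.
Proof. by move=> t [->|[n [k [_ _ ->]]]]; [exact: ler01| exact: dy_ge0]. Qed.
Arguments Sx_lb : clear implicits.
Lemma Sx_hlb x : has_lbound (Sx x). Proof. by exists 0; exact: Sx_lb. Qed.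

Lemma ury_ge0 x : 0 <= ury x.
Proof. exact: lb_le_inf (Sx_ne x) (Sx_lb x). Qed.

Lemma ury_le1 x : ury x <= 1.
Proof. by apply: (ge_inf (Sx_hlb x)); left. Qed.

Lemma ury_leO n k x : (k <= 2 ^ n)%N -> (dat n k).1 x -> ury x <= dy n k.
Proof. by move=> h1 h2; apply: (ge_inf (Sx_hlb x)); right; exists n, k. Qed.

Lemma ury_geN n k x : (k <= 2 ^ n)%N -> ~ (dat n k).1 x -> dy n k <= ury x.
Proof.
move=> kn nx; apply: lb_le_inf (Sx_ne x) _ => t [->|[m [j [jm xj ->]]]].
  exact: dy_le1.
rewrite leNgt; apply/negP; rewrite dy_lt => h.
by apply: nx; apply: (chain jm kn h); apply: datO_sub.
Qed.

Lemma ury_leC n k x : (k < 2 ^ n)%N -> (dat n k).2 x -> ury x <= dy n k.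
Proof.
move=> kn xk; apply/ler_addgt0Pr => e e0.
have [m hm] := small_pow e0.
have hJ : (k * 2 ^ m < (k * 2 ^ m).+1 <= 2 ^ (m + n))%N.
  rewrite ltnSn /= expnD.
  have p := expn_gt0 2 m; move: p kn; rewrite /=; generalize (2 ^ m)%N (2 ^ n)%N => a b.
  nia.
have xJ : (dat (m + n) (k * 2 ^ m).+1).1 x.
  by apply: (chain_same hJ); rewrite dat_lift.
apply: le_trans (ury_leO _ xJ) _; first by move: hJ => /andP[].
have -> : dy (m + n) (k * 2 ^ m).+1 = dy n k + ((2 ^ (m + n))%N%:R)^-1.
  rewrite /dy -addn1 natrD natrM expnD natrM mulrDl div1r; congr (_ + _).
  have a0 := pow2_gt0 m; have b0 := pow2_gt0 n.
  rewrite [X in _ / X]mulrC invfM mulrA mulrAC mulfK //; by rewrite gt_eqF.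
rewrite lerD2l; apply: le_trans (ltW hm).
rewrite lef_pV2 ?posrE ?pow2_gt0 // ler_nat leq_exp2l //; lia.
Qed.
Lemma ury_iso x y : r x y -> ury x <= ury y.
Proof.
move=> rxy; apply: lb_le_inf (Sx_ne y) _ => t [->|[n [k [kn yk ->]]]].
  exact: ury_le1.
exact: (ury_leO kn (datO_decr kn rxy yk)).
Qed.

Lemma open_lt t : open [set x | ury x < t].
Proof.
have [t1|t1] := ltrP 1 t.
  rewrite (_ : [set x | ury x < t] = setT); first exact: openT.
  by apply/seteqP; split => // x _; exact: le_lt_trans (ury_le1 x) t1.
have -> : [set x | ury x < t] = \bigcup_(p in [set p : nat * nat |
    (p.2 <= 2 ^ p.1)%N /\ dy p.1 p.2 < t]) (dat p.1 p.2).1.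
  apply/seteqP; split => x /=.
    move=> h; have [s [->|[n [k [kn xk ->]]]] st] := inf_lt (Sx_ne x) h.
      by move: st; rewrite ltNge t1.
    by exists (n, k).
  by move=> [[n k] /= [kn dt] xk]; exact: le_lt_trans (ury_leO kn xk) dt.
by apply: bigcup_open => -[n k] /= [kn _]; exact: datO_open.
Qed.

Lemma open_gt t : open [set x | t < ury x].
Proof.
have [t0|t0] := ltrP t 0.
  rewrite (_ : [set x | t < ury x] = setT); first exact: openT.
  by apply/seteqP; split => // x _; exact: lt_le_trans t0 (ury_ge0 x).
have -> : [set x | t < ury x] = \bigcup_(p in [set p : nat * nat |
    (p.2 <= 2 ^ p.1)%N /\ t < dy p.1 p.2]) ~` (dat p.1 p.2).2.
  apply/seteqP; split => x /=.
    move=> h; have [n [k [kn tk ku]]] := dy_dense t0 h (ury_le1 x).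
    exists (n, k) => /=; first by split => //; exact: ltnW.
    by move=> xK; have := ury_leC kn xK; rewrite leNgt ku.
  move=> [[n k] /= [kn tk] nK]; apply: lt_le_trans tk (ury_geN kn _).
  by move=> xO; apply: nK; exact: datO_sub kn _ xO.
apply: bigcup_open => -[n k] /= [kn _]; apply: closed_openC; exact: datC_closed.
Qed.

Lemma ury_cont : continuous ury.
Proof.
move=> x; apply/cvgrPdist_lt => e e0.
have hx : open_nbhs x ([set y | ury x - e < ury y] `&` [set y | ury y < ury x + e]).
  split; first by apply: openI; [exact: open_gt| exact: open_lt].
  by split => /=; rewrite ?ltrBlDr ltrDl.
move: (open_nbhs_nbhs hx); apply: filterS => y [h1 h2].
by rewrite ltr_distlC h1 h2.
Qed.

Lemma ury_props : [/\ continuous ury, (forall x, 0 <= ury x <= 1),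
  (forall x y, r x y -> ury x <= ury y), (forall x, C0 x -> ury x = 0) &
  (forall x, ~ U1 x -> ury x = 1)].
Proof.
split.
- exact: ury_cont.
- by move=> x; rewrite ury_ge0 ury_le1.
- exact: ury_iso.
- move=> x Cx; apply/le_anti; rewrite ury_ge0 andbT.
  by have := ury_leO (isT : (0 <= 2 ^ 0)%N) (dat_bot Cx); rewrite /dy mul0r.
- move=> x Ux; apply/le_anti; rewrite ury_le1 /=.
  by have := @ury_geN 0 1 x isT Ux; rewrite /dy expn0 divr1.
Qed.

End UryC.

Lemma order_urysohn a b : ~ r a b -> exists h : K -> R,
  [/\ continuous h, (forall x, 0 <= h x <= 1),
      (forall x y, r x y -> h x <= h y) & h b < h a].
Proof.
move=> nab.
have c1 : closed [set b] by apply/accessible_closed_set1/hausdorff_accessible.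
have gC0 : goodC [set x | r x b].
  split; last by move=> x y rxy ryb; exact: rt rxy ryb.
  rewrite (_ : [set x | r x b] = [set x | exists2 a', [set b] a' & r x a']).
    exact: closed_downset.
  by apply/seteqP; split => x /=; [exists b|case=> a' -> ].
have gU1 : goodO (~` [set x | r a x]).
  split; last by move=> x y rxy nay rax; apply: nay; exact: rt rax rxy.
  apply: closed_openC.
  have ca : closed [set a] by apply/accessible_closed_set1/hausdorff_accessible.
  rewrite (_ : [set x | r a x] = [set x | exists2 a', [set a] a' & r a' x]).
    exact: closed_upset.
  by apply/seteqP; split => x /=; [exists a|case=> a' -> ].
have CU : [set x | r x b] `<=` ~` [set x | r a x].
  by move=> x rxb rax; apply: nab; exact: rt rax rxb.
have [h1 h2 h3 h4 h5] := ury_props gC0 gU1 CU.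
exists (ury [set x | r x b] (~` [set x | r a x])); split => //.
have e2 := h5 a (fun H => H (rr a)).
by rewrite (h4 _ (rr b)) e2 ltr01.
Qed.

End OrdUrysohn.
Local Open Scope quotient_scope.
Lemma piQ_eq (R : realType) (E : topologicalType) (le : E -> E -> Prop)
  (bE : topologicalType) (b : E -> bE) p q :
  beta_proj R le b p = beta_proj R le b q <-> sim_beta R le b p q.
Proof.
rewrite /beta_proj /beta_quot.
split; first by move=> h; apply/(@eqquotP _ _ {eq_quot (sim_beta_equiv R le b)}).
by move=> h; exact: (elimT (@eqquotP _ _ {eq_quot (sim_beta_equiv R le b)} p q) h).
Qed.
Section Generic.
Variable R : realType.

Lemma sepR (a c : R) : a <> c -> exists U V : set R,
  [/\ open U, open V, U a, V c & forall z, U z -> V z -> False].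
Proof.
move=> ac; have := (@Rhausdorff R); rewrite open_hausdorff => /(_ a c).
case; first by apply/eqP.
move=> [U V] /= [aU cV] [oU oV /eqP UV]; exists U, V; split => //.
- exact: set_mem.
- exact: set_mem.
by move=> z Uz Vz; have : (U `&` V) z by []; rewrite UV.
Qed.

Lemma cont_nbhs (T U : topologicalType) (g : T -> U) x V :
  continuous g -> open V -> V (g x) -> nbhs x (g @^-1` V).
Proof.
move=> cg oV Vx; apply: open_nbhs_nbhs; split => //.
exact: (iffLR (continuousP g) cg).
Qed.

Lemma dense_eq (T : topologicalType) (S : set T) (g1 g2 : T -> R) :
  dense S -> continuous g1 -> continuous g2 ->
  (forall x, S x -> g1 x = g2 x) -> forall x, g1 x = g2 x.
Proof.
move=> dS c1 c2 h x; apply: contrapT => nx.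
have [U [V [oU oV Ux Vx UV]]] := sepR nx.
have oO : open (g1 @^-1` U `&` g2 @^-1` V).
  by apply: openI; apply: (iffLR (continuousP _)).
have [z [[Uz Vz] Sz]] := dS _ (ex_intro _ x (conj Ux Vx)) oO.
by apply: (UV (g1 z)) => //; rewrite h.
Qed.

Lemma haus_of_sep (T : topologicalType) (I : Type) (P : I -> Prop)
    (phi : I -> T -> R) :
  (forall i, P i -> continuous (phi i)) ->
  (forall x y, x <> y -> exists i, P i /\ phi i x <> phi i y) ->
  hausdorff_space T.
Proof.
move=> cphi sep; rewrite open_hausdorff => x y /eqP xy.
have [i [Pi ne]] := sep _ _ xy.
have [U [V [oU oV Ux Vx UV]]] := sepR ne.
exists (phi i @^-1` U, phi i @^-1` V) => /=.
  by split; apply: mem_set.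
split; try exact: (iffLR (continuousP _) (cphi _ Pi)).
by apply/eqP; apply/seteqP; split => // z [] /UV h /h.
Qed.

Lemma ext_point (E X Y : topologicalType) (c1 : E -> X) (c2 : E -> Y) :
  dense (range c1) -> compact [set: Y] -> forall x, exists y,
  forall (g : X -> R) (h : Y -> R), continuous g -> continuous h ->
    (forall e, g (c1 e) = h (c2 e)) -> h y = g x.
Proof.
move=> dc cY x.
pose G := [set S : set Y | exists2 W, nbhs x W & forall e, W (c1 e) -> S (c2 e)].
have FG : ProperFilter G.
  split.
    move=> [W nW hW]; move: nW; rewrite nbhsE => -[Ob oO OW].
    case: oO => oO Ox.
    have [z [Oz [e _ ez]]] := dc Ob (ex_intro _ x Ox) oO.
    by apply: (hW e); apply: OW; rewrite ez.
  split.
  - by exists setT => //; exact: filterT.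
  - move=> A B [W1 n1 h1] [W2 n2 h2]; exists (W1 `&` W2); first exact: filterI.
    by move=> e [w1 w2]; split; [exact: h1|exact: h2].
  - by move=> A B AB [W nW hW]; exists W => // e /hW; exact: AB.
have GT : G setT by exists setT => //; exact: filterT.
have [y [_ cly]] := cY G FG GT.
exists y => g h cg ch gh; apply: contrapT => ne.
have [U [V [oU oV Uy Vx UV]]] := sepR ne.
have GS : G (h @^-1` V).
  by exists (g @^-1` V); [exact: cont_nbhs| move=> e /=; rewrite gh].
have [z [Vz Uz]] := cly _ _ GS (cont_nbhs ch oU Uy).
exact: UV Uz Vz.
Qed.

Lemma cont_by_sep (X Y : topologicalType) (D : X -> Y) (I : Type) (P : I -> Prop)
    (phi : I -> Y -> R) :
  compact [set: Y] -> hausdorff_space Y ->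
  (forall i, P i -> continuous (phi i)) ->
  (forall y y', y <> y' -> exists i, P i /\ phi i y <> phi i y') ->
  (forall i, P i -> continuous (phi i \o D)) -> continuous D.
Proof.
move=> cY hY cphi sep cphiD x.
apply: (@compact_cluster_set1 Y (D x) (D @ x) setT hY cY); first exact: filterT.
- exact: filterT.
apply/seteqP; split => y /=.
  move=> cly; apply: contrapT => ne.
  have [i [Pi ne']] := sep _ _ ne.
  have [U [V [oU oV Uy Vx UV]]] := sepR ne'.
  have F1 : (D @ x) (phi i @^-1` V) by exact: (cont_nbhs (cphiD _ Pi) oV Vx).
  have [z [Vz Uz]] := cly _ _ F1 (cont_nbhs (cphi _ Pi) oU Uy).
  exact: UV Uz Vz.
move=> -> A B FA nB; exists (D x); split.
  exact: (nbhs_singleton FA).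
exact: nbhs_singleton.
Qed.

End Generic.
Lemma open_fbigcap (T : topologicalType) (I : choiceType) (D : {fset I}) (F : I -> set T) :
  (forall i, i \in D -> open (F i)) -> open (\bigcap_(i in [set` D]) F i).
Proof.
move=> oF; rewrite openE => x hx; apply: filter_bigI => i iD.
by have := oF i iD; rewrite openE => /(_ x (hx i iD)).
Qed.

Section Main.
Variables (R : realType) (E : topologicalType) (le : E -> E -> Prop)
  (bE : topologicalType) (b : E -> bE)
  (nE : topologicalType) (len : nE -> nE -> Prop) (n : E -> nE).
Hypotheses (hcro : completely_regularly_ordered R le) (hsc : stone_cech R b)
  (hna : nachbin_compactification R le len n).

Local Notation FF := (@cont_iso01 R E le).
Local Notation Q := (beta_quot R le b).
Local Notation pi := (beta_proj R le b).

Definition ext (f : E -> R) : bE -> R :=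
  match pselect (exists g : bE -> R, continuous g /\ forall x, g (b x) = f x) with
  | left h => projT1 (cid h) | right _ => fun _ => 0 end.

Lemma extP f : FF f -> continuous (ext f) /\ forall x, ext f (b x) = f x.
Proof.
move=> [cf f01 _]; rewrite /ext; case: pselect => [h|h]; first exact: projT2 (cid h).
exfalso; apply: h; case: hsc => _ _ _ _ hx; apply: hx cf _.
by exists 1 => x; have /andP[a c] := f01 x; rewrite ger0_norm.
Qed.

Lemma b_dense : dense (range b). Proof. by case: hsc. Qed.
Lemma bE_compact : compact [set: bE]. Proof. by case: hsc. Qed.

Lemma ext_uniq f g : FF f -> continuous g -> (forall x, g (b x) = f x) ->
  forall p, g p = ext f p.
Proof.
move=> Ff cg hg; have [ce he] := extP Ff; apply: dense_eq b_dense cg ce _.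
by move=> _ [x _ <-]; rewrite hg he.
Qed.

Lemma le_betaP p q : le_beta R le b p q <-> forall f, FF f -> ext f p <= ext f q.
Proof.
split.
  by move=> h f Ff; have [ce he] := extP Ff; exact: h f Ff (ext f) ce he.
by move=> h f Ff g cg hg; rewrite !(ext_uniq Ff cg hg); exact: h.
Qed.

Lemma simP p q : sim_beta R le b p q <-> forall f, FF f -> ext f p = ext f q.
Proof.
rewrite /sim_beta; split.
  move/asboolP => [h1 h2] f Ff; apply/le_anti.
  by rewrite ((iffLR (le_betaP _ _)) h1 f Ff) ((iffLR (le_betaP _ _)) h2 f Ff).
move=> h; apply/asboolP; split; apply/le_betaP => f Ff; by rewrite (h f Ff).
Qed.

Definition phi f (P : Q) := ext f (repr P).

Lemma piK (P : Q) : pi (repr P) = P.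
Proof. by rewrite /beta_proj reprK. Qed.

Lemma phi_pi f p : FF f -> phi f (pi p) = ext f p.
Proof.
move=> Ff; have : pi (repr (pi p)) = pi p by rewrite piK.
by move/piQ_eq/simP; apply.
Qed.

Lemma phi_cont f : FF f -> continuous (phi f).
Proof.
move=> Ff; have [ce _] := extP Ff.
apply: (@repr_comp_continuous bE {eq_quot (sim_beta_equiv R le b)} R (ext f) ce).
move=> a c /eqP h; apply/eqP; apply: (iffLR (simP _ _)) => //.
by apply/piQ_eq; exact: h.
Qed.

Lemma Q_eq (P P' : Q) : (forall f, FF f -> phi f P = phi f P') -> P = P'.
Proof.
move=> h; rewrite -(piK P) -(piK P'); apply/piQ_eq/simP; exact: h.
Qed.

Lemma le_quotP (P P' : Q) : le_quot P P' <-> forall f, FF f -> phi f P <= phi f P'.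
Proof. exact: le_betaP. Qed.

Lemma Q_sep (P P' : Q) : P <> P' -> exists f, FF f /\ phi f P <> phi f P'.
Proof.
move=> ne; apply: contrapT => h; apply: ne; apply: Q_eq => f Ff.
by apply: contrapT => hne; apply: h; exists f.
Qed.

Lemma Q_compact : compact [set: Q].
Proof.
have -> : [set: Q] = pi @` [set: bE].
  by apply/seteqP; split => // P _; exists (repr P) => //; rewrite piK.
apply: continuous_compact; last exact: bE_compact.
apply: continuous_subspaceT => x; exact: pi_continuous.
Qed.

Lemma Q_haus : hausdorff_space Q.
Proof. exact: (haus_of_sep phi_cont Q_sep). Qed.


Lemma Q_order : is_order (@le_quot R E le bE b).
Proof.
split.
- by move=> P; apply/le_quotP => f _.
- move=> P P' h1 h2; apply: Q_eq => f Ff; apply/le_anti.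
  by rewrite ((iffLR (le_quotP _ _)) h1 f Ff) ((iffLR (le_quotP _ _)) h2 f Ff).
- move=> P P' P'' h1 h2; apply/le_quotP => f Ff.
  exact: le_trans ((iffLR (le_quotP _ _)) h1 f Ff) ((iffLR (le_quotP _ _)) h2 f Ff).
Qed.

Lemma Q_closed : closed [set p : Q * Q | le_quot p.1 p.2].
Proof.
have -> : [set p : Q * Q | le_quot p.1 p.2] =
    \bigcap_(f in FF) [set p : Q * Q | phi f p.1 <= phi f p.2].
  apply/seteqP; split => p /=.
    by move/le_quotP => h f Ff; exact: h.
  by move=> h; apply/le_quotP => f Ff; exact: h.
apply: closed_bigI => f Ff.
have -> : [set p : Q * Q | phi f p.1 <= phi f p.2] =
    (fun p : Q * Q => phi f p.2 - phi f p.1) @^-1` [set x : R | 0 <= x].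
  by apply/seteqP; split => p /=; rewrite subr_ge0.
have : continuous (fun p : Q * Q => phi f p.2 - phi f p.1).
  move=> p; apply: cvgB.
    apply: (@continuous_comp _ _ _ snd (phi f)); first exact: cvg_snd.
    exact: phi_cont.
  apply: (@continuous_comp _ _ _ fst (phi f)); first exact: cvg_fst.
  exact: phi_cont.
by move/continuous_closedP; apply; exact: closed_ge.
Qed.

Lemma Q_dense : dense (range (pi \o b)).
Proof.
move=> O [P OP] oO.
have oO' : open (pi @^-1` O) by exact: (iffLR (continuousP _) pi_continuous).
have [z [Oz [x _ xz]]] := b_dense (ex_intro _ (repr P) (eq_ind_r O OP (piK P))) oO'.
by exists (pi z); split => //; exists x => //=; rewrite xz.
Qed.

Lemma Q_iff x y : le x y <-> le_quot (pi (b x)) (pi (b y)).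
Proof.
case: hcro => _ _ hle; rewrite hle; split.
  move=> h; apply/le_quotP => f Ff; rewrite !phi_pi //.
  by have [_ he] := extP Ff; rewrite !he; exact: h.
move/le_quotP => h f Ff; have := h f Ff; rewrite !phi_pi //.
by have [_ he] := extP Ff; rewrite !he.
Qed.
Definition lift (A : set E) : set Q :=
  match pselect (exists fW : (E -> R) * set R,
      [/\ FF fW.1, open fW.2 & A = fW.1 @^-1` fW.2]) with
  | left h => phi (projT1 (cid h)).1 @^-1` (projT1 (cid h)).2
  | right _ => setT end.

Lemma liftP A : subbasic_F R le A -> open (lift A) /\ forall x, lift A (pi (b x)) <-> A x.
Proof.
move=> [f [Ff [W [oW AW]]]]; rewrite /lift; case: pselect => [h|h]; last first.
  by exfalso; apply: h; exists (f, W).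
set fW := projT1 (cid h); have [Ff' oW' AW'] : [/\ FF fW.1, open fW.2 & A = fW.1 @^-1` fW.2].
  exact: projT2 (cid h).
split; first exact: (iffLR (continuousP _) (phi_cont Ff') _ oW').
move=> x /=; rewrite AW' /= phi_pi //; have [_ he] := extP Ff'; by rewrite he.
Qed.

Lemma Q_embed : embedding (pi \o b).
Proof.
case: hsc => _ _ [_ cb _] _ _.
split.
- move=> x y /piQ_eq/simP h.
  case: hcro => [[_ anti _] _ hle]; apply: anti; apply/hle => f Ff;
    have [_ he] := extP Ff; by rewrite -!he (h f Ff).
- move=> x; apply: continuous_comp; [exact: cb | exact: pi_continuous].
move=> U oU; case: hcro => _ hinit _; have hU := (iffLR (hinit U) oU).
exists (\bigcup_(D in [set D : {fset (set E)} | {subset D <= (subbasic_F R le : set (set E))} /\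
    \bigcap_(i in [set` D]) i `<=` U]) \bigcap_(i in [set` D]) lift i).
split.
  apply: bigcup_open => D [sub _]; apply: open_fbigcap => i iD.
  exact: (liftP (set_mem (sub i iD))).1.
apply/seteqP; split.
  move=> _ [x Ux <-]; split; last by exists x.
  have [B [D sub <-] [Bx BU]] := hU x Ux.
  exists D; first by split.
  move=> i iD; apply/(liftP (set_mem (sub i iD))).2; exact: Bx i iD.
move=> P [[D [sub DU] hD] [x _ xP]]; exists x => //; apply: DU => i iD.
apply/(liftP (set_mem (sub i iD))).2; have := hD i iD; by rewrite -xP.
Qed.

Lemma part1 : T2_order_compactification le (@le_quot R E le bE b) (pi \o b).
Proof.
split.
- exact: Q_compact.
- exact: Q_haus.
- split; [exact: Q_order | exact: Q_closed].
- split; [exact: Q_embed | exact: Q_dense].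
- exact: Q_iff.
Qed.
Definition hN (f : E -> R) : nE -> R :=
  match pselect (exists g : nE -> R, [/\ continuous g, (forall x, 0 <= g x <= 1),
     (forall x y, len x y -> g x <= g y) & forall x, g (n x) = f x]) with
  | left h => projT1 (cid h) | right _ => fun _ => 0 end.

Lemma hNP f : FF f -> [/\ continuous (hN f), (forall x, 0 <= hN f x <= 1),
     (forall x y, len x y -> hN f x <= hN f y) & forall x, hN f (n x) = f x].
Proof.
move=> Ff; case: hna => _ hx; rewrite /hN; case: pselect => [h|h].
  exact: projT2 (cid h).
by exfalso; apply: h; exact: hx.
Qed.

Lemma dirA : compactification_le (@le_quot R E le bE b) (pi \o b) len n.
Proof.
case: hna => [[cnE hnE [[rr anti rt] cl] [[_ cn _] dn] iffn] _].
have [pA hpA] := boolp.choice (@ext_point R E nE bE n b dn bE_compact).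
have phiA f q : FF f -> phi f (pi (pA q)) = hN f q.
  move=> Ff; rewrite phi_pi //; have [c1 _ _ e1] := hNP Ff; have [ce e2] := extP Ff.
  by apply: (hpA q (hN f) (ext f) c1 ce) => e; rewrite e1 e2.
exists (fun q => pi (pA q)); split.
- apply: (cont_by_sep (P := FF) (phi := phi) Q_compact Q_haus phi_cont Q_sep).
  move=> f Ff.
  have -> : phi f \o (fun q => pi (pA q)) = hN f.
    by apply: funext => q; exact: phiA.
  by case: (hNP Ff).
- move=> q q' lq; apply/le_quotP => f Ff; rewrite !phiA //.
  by have [_ _ iso _] := hNP Ff; exact: iso.
- move=> x; apply: Q_eq => f Ff; rewrite phiA // phi_pi //.
  by have [_ _ _ e1] := hNP Ff; have [_ e2] := extP Ff; rewrite e1 e2.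
Qed.

Definition Hn (h : nE -> R) := [/\ continuous h, (forall x, 0 <= h x <= 1) &
  (forall x y, len x y -> h x <= h y)].

Lemma Hn_FF h : Hn h -> FF (h \o n).
Proof.
case: hna => [[cnE hnE [[rr anti rt] cl] [[_ cn _] dn] iffn] _] [ch h01 hiso].
split.
- by move=> x; apply: continuous_comp; [exact: cn | exact: ch].
- by move=> x; exact: h01.
- by move=> x y lxy; apply: hiso; apply/iffn.
Qed.

Lemma dirB : compactification_le len n (@le_quot R E le bE b) (pi \o b).
Proof.
case: hna => [[cnE hnE [[rr anti rt] cl] [[_ cn _] dn] iffn] _].
have [gB hgB] := boolp.choice (@ext_point R E bE nE b n b_dense cnE).
have key h P : Hn h -> h (gB (repr P)) = phi (h \o n) P.
  move=> Hh; have [ce he] := extP (Hn_FF Hh); case: Hh => ch _ _.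
  by apply: (hgB (repr P) (ext (h \o n)) h ce ch) => e; rewrite he.
have OU a c : ~ len a c -> exists h, Hn h /\ h c < h a.
  move=> nac; have [h [h1 h2 h3 h4]] := @order_urysohn R nE len cnE hnE rr rt cl a c nac.
  by exists h; split.
have sep q q' : q <> q' -> exists h, Hn h /\ h q <> h q'.
  move=> ne; have [nl|nl] : ~ len q q' \/ ~ len q' q.
    by apply: contrapT => /not_orP [/contrapT h1 /contrapT h2]; apply: ne; exact: anti.
    have [h [Hh lt]] := OU _ _ nl; exists h; split => // e.
    by move: lt; rewrite e ltxx.
  have [h [Hh lt]] := OU _ _ nl; exists h; split => // e.
  by move: lt; rewrite e ltxx.
exists (fun P => gB (repr P)); split.
- apply: (cont_by_sep (P := Hn) (phi := fun h => h) cnE hnE _ sep).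
    by move=> h [].
  move=> h Hh.
  have -> : h \o (fun P => gB (repr P)) = phi (h \o n).
    by apply: funext => P; exact: key.
  exact: phi_cont (Hn_FF Hh).
- move=> P P' lq; apply: contrapT => nl.
  have [h [Hh lt]] := OU _ _ nl.
  have := (iffLR (le_quotP _ _) lq) _ (Hn_FF Hh).
  by rewrite -!key // leNgt lt.
- move=> x; apply: contrapT => ne; have [h [Hh hne]] := sep _ _ ne; apply: hne.
  rewrite /= key // phi_pi; last exact: Hn_FF.
  by have [_ he] := extP (Hn_FF Hh); rewrite he.
Qed.

End Main.

Local Close Scope quotient_scope.
Unset Implicit Arguments.

Theorem mainTheorem10 (R : realType) (E : topologicalType) (le : E -> E -> Prop)
    (bE : topologicalType) (b : E -> bE)
    (nE : topologicalType) (len : nE -> nE -> Prop) (n : E -> nE) :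
  completely_regularly_ordered R le ->
  stone_cech R b ->
  nachbin_compactification R le len n ->
  T2_order_compactification le (@le_quot R E le bE b) (beta_proj R le b \o b) /\
  compactification_equiv (@le_quot R E le bE b) (beta_proj R le b \o b) len n.
Proof.
move=> h1 h2 h3; split; first exact: part1.
split; [exact: dirA | exact: dirB].
Qed.
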